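(* Let $N\ge 1$ be an integer, $\rho,\alpha,q\in[0,1]$, and $(r_n)_{n\ge0}$ with $0\le r_n<1$. Let $Z_n(i)\in[0,1]$ ($i=1,\dots,N$, $n\ge 0$) evolve by $Z_{n+1}(i)=(1-r_n)Z_n(i)+r_n(\rho I_{n+1}(i)+(1-\rho)q)$, where, with $\mathcal F_n=\sigma(Z_k(i):\,1\le i\le N,\ 0\le k\le n)$ and $Z_n=\frac1N\sum_{i=1}^N Z_n(i)$, the $I_{n+1}(1),\dots,I_{n+1}(N)\in\{0,1\}$ are conditionally independent given $\mathcal F_n$ with $P(I_{n+1}(i)=1\mid\mathcal F_n)=(1-\alpha)Z_n(i)+\alpha Z_n$. Suppose $\sum_n r_n=+\infty$, $\sum_n r_n^2<+\infty$ and $\rho(1-\alpha)<1$. Then for every $i\in\{1,\dots,N\}$, $Z_n(i)-Z_n\to0$ almost surely. In particular, if $Z$ is the almost sure limit of $Z_n$, then $Z_n(i)\to Z$ almost surely for every $i$.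
   Context: The paper's standing assumption on the initial condition (permutation invariant law, $E[Z_0(i)]=1/2$, $E[Z_0(1-Z_0)]>0$) may also be imposed but is not needed for this result. *)

(* Defs.v *)
From HB Require Import structures.
From mathcomp Require Import all_boot all_order all_algebra.
From mathcomp Require Import all_classical all_reals all_analysis.
Set Implicit Arguments. Unset Strict Implicit. Unset Printing Implicit Defensive.
Import Order.TTheory GRing.Theory Num.Theory.
Import numFieldNormedType.Exports.
Local Open Scope classical_set_scope.
Local Open Scope ring_scope.

Definition zmean (T : Type) (R : realType) (N : nat) (Z : nat -> 'I_N -> T -> R)
  (n : nat) (t : T) : R :=
  (\sum_(i < N) Z n i t) / N%:R.

Definition natural_gens (T : Type) (R : realType) (N : nat)
  (Z : nat -> 'I_N -> T -> R) (n : nat) : set (set T) :=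
  [set A | exists k (i : 'I_N) (B : set R),
      (k <= n)%N /\ measurable B /\ A = Z k i @^-1` B].

Definition natural_filtration (T : Type) (R : realType) (N : nat)
  (Z : nat -> 'I_N -> T -> R) (n : nat) : set (set T) :=
  <<s natural_gens Z n >>.

(* Conditional law of (I_{n+1}(1),...,I_{n+1}(N)) given F_n:
   the I_{n+1}(i) are conditionally independent given F_n with
   P(I_{n+1}(i) = 1 | F_n) = p i (p i being F_n-measurable).
   Stated through the defining property of conditional probability:
   for every A in F_n and every e in {0,1}^N,
     E[1_A 1{I_{n+1} = e}] = E[1_A prod_i (p_i if e_i = 1 else 1 - p_i)]. *)
Definition cond_indep_bernoulli (d : measure_display) (T : measurableType d)
  (R : realType) (P : probability T R) (N : nat)
  (F : set (set T)) (Inext : 'I_N -> T -> R) (p : 'I_N -> T -> R) : Prop :=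
  forall (A : set T) (e : 'I_N -> bool), F A ->
    (\int[P]_(t in A) (\prod_(i < N) ((Inext i t == (e i)%:R)%:R : R))%:E
     = \int[P]_(t in A) (\prod_(i < N) (if e i then p i t else 1 - p i t))%:E)%E.

(* Main.v *)
Require Import Defs.
Set Warnings "-notation-overridden,-ambiguous-paths,-notation-incompatible-prefix".
From HB Require Import structures.
From mathcomp Require Import all_boot all_order all_algebra.
From mathcomp Require Import all_classical all_reals all_analysis.
From mathcomp Require Import measurable_realfun.
From Stdlib Require Import Lia.
From mathcomp Require Import zify ring lra.
Import Order.TTheory GRing.Theory Num.Theory.
Import numFieldNormedType.Exports.
Local Open Scope classical_set_scope.
Local Open Scope ring_scope.
Set Implicit Arguments. Unset Strict Implicit. Unset Printing Implicit Defensive.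

Lemma sum_marg (R : realType) (N : nat) (F : 'I_N -> bool -> R) (j : 'I_N) :
  (forall i, F i true + F i false = 1) ->
  \sum_(e : {ffun 'I_N -> bool} | e j) \prod_(i < N) F i (e i) = F j true.
Proof.
move=> F1.
pose G i b := if i == j then (if b then F i b else 0) else F i b.
have H1 : \prod_(i < N) \sum_(b : bool) G i b = F j true.
  rewrite (bigD1 j) //= big_bool /G eqxx /= addr0.
  rewrite big1 ?mulr1 // => i /negbTE ij; rewrite big_bool /= ij F1 //.
rewrite -H1 bigA_distr_bigA /= big_mkcond /=; apply: eq_bigr => e _.
case: ifPn => ej.
  apply: eq_bigr => i _; rewrite /G; case: eqP => // ->; by rewrite ej.
by rewrite (bigD1 j) //= /G eqxx (negbTE ej) mul0r.
Qed.
Section E.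
Context d (T : measurableType d) (R : realType) (P : probability T R).

Definition bm (f : T -> R) := measurable_fun setT f /\ exists B : R, forall t, `|f t| <= B.
Definition EE (f : T -> R) := \int[P]_t f t.

Lemma bm_int f : bm f -> P.-integrable setT (EFin \o f).
Proof.
move=> [mf [B fB]]; apply: measurable_bounded_integrable => //.

  by rewrite ltey_eq fin_num_measure.
rewrite /bounded_near; near=> M => t _ /=; apply: le_trans (fB t) _.
by near: M; apply: nbhs_pinfty_ge; exact: num_real.
Unshelve. all: end_near. Qed.

Lemma bm_cst c : bm (fun=> c).
Proof. by split; [exact: measurable_cst | exists `|c|]. Qed.

Lemma bmD f g : bm f -> bm g -> bm (fun t => f t + g t).
Proof.
move=> [mf [B fB]] [mg [C gC]]; split; first exact: measurable_funD.
by exists (B + C) => t; apply: le_trans (ler_normD _ _) (lerD (fB t) (gC t)).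
Qed.

Lemma bmN f : bm f -> bm (fun t => - f t).
Proof.
move=> [mf [B fB]]; split; first exact: measurable_funN.
by exists B => t; rewrite normrN.
Qed.

Lemma bmB f g : bm f -> bm g -> bm (fun t => f t - g t).
Proof. by move=> bf bg; apply: bmD => //; exact: bmN. Qed.

Lemma bmM f g : bm f -> bm g -> bm (fun t => f t * g t).
Proof.
move=> [mf [B fB]] [mg [C gC]]; split; first exact: measurable_funM.
exists (B * C) => t; rewrite normrM; apply: ler_pM => //.
Qed.

Lemma bm_sum (I : Type) (s : seq I) (F : I -> T -> R) :
  (forall i, bm (F i)) -> bm (fun t => \sum_(i <- s) F i t).
Proof.
move=> bF; elim: s => [|a s ih].
  by under eq_fun do rewrite big_nil; exact: bm_cst.
by under eq_fun do rewrite big_cons; apply: bmD.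
Qed.

Lemma EED f g : bm f -> bm g -> EE (fun t => f t + g t) = EE f + EE g.
Proof. by move=> bf bg; rewrite /EE RintegralD //; exact: bm_int. Qed.

Lemma EEN f : bm f -> EE (fun t => - f t) = - EE f.
Proof.
move=> bf; rewrite /EE -mulN1r -RintegralZl //; last exact: bm_int.
by apply: eq_Rintegral => t _; rewrite mulN1r.
Qed.

Lemma EEB f g : bm f -> bm g -> EE (fun t => f t - g t) = EE f - EE g.
Proof. by move=> bf bg; rewrite EED ?EEN //; exact: bmN. Qed.

Lemma EEZ c f : bm f -> EE (fun t => c * f t) = c * EE f.
Proof. by move=> bf; rewrite /EE RintegralZl //; exact: bm_int. Qed.

Lemma EE_cst c : EE (fun=> c) = c.
Proof.
rewrite /EE Rintegral_cst // [fine _](_ : _ = 1) ?mulr1 //.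
rewrite -[RHS]/(fine 1%E); congr fine; exact: probability_setT.
Qed.

Lemma EE_sum (I : Type) (s : seq I) (F : I -> T -> R) :
  (forall i, bm (F i)) -> EE (fun t => \sum_(i <- s) F i t) = \sum_(i <- s) EE (F i).
Proof.
move=> bF; elim: s => [|a s ih].
  by under eq_fun do rewrite big_nil; rewrite big_nil EE_cst.
under eq_fun do rewrite big_cons; rewrite big_cons EED ?ih //; exact: bm_sum.
Qed.

Lemma EE_le f g : bm f -> bm g -> (forall t, f t <= g t) -> EE f <= EE g.
Proof. by move=> bf bg fg; apply: le_Rintegral => //; exact: bm_int. Qed.

Lemma EE_norm f : bm f -> `|EE f| <= EE (fun t => `|f t|).
Proof. by move=> bf; apply: le_normr_Rintegral => //; exact: bm_int. Qed.

Lemma bm_norm f : bm f -> bm (fun t => `|f t|).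
Proof.
move=> [mf [B fB]]; split; first exact: measurableT_comp.
by exists B => t; rewrite normr_id.
Qed.

End E.
Lemma small_eq0 (R : realType) (x C : R) : (forall k : nat, `|x| <= C / k.+1%:R) -> x = 0.
Proof.
move=> H; apply/eqP; rewrite -normr_le0; rewrite leNgt; apply/negP => x0.
have C0 : 0 <= C by have := H 0%N; rewrite divr1 => /(le_trans _)-> //.
have := archi_boundP (divr_ge0 C0 (ltW x0)).
set k := Num.bound _ => hk.
have := H k; rewrite ler_pdivlMr ?ltr0Sn // => hx.
have : C < `|x| * k%:R by rewrite -ltr_pdivrMl // mulrC.
move=> h; have : `|x| * k.+1%:R <= `|x| * k%:R by apply: le_trans hx (ltW h).
rewrite ler_pM2l // ler_nat ltnn //.
Qed.

Lemma sum_ind (R : realType) (s : seq int) (x : int) (c : int -> R) :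
  uniq s -> x \in s -> \sum_(m <- s) (c m * (x == m)%:R) = c x.
Proof.
elim: s => //= a s ih /andP[aS us]; rewrite inE big_cons.
case: (eqVneq x a) => [->|xa] /= => [_|xs].
  rewrite mulr1 big1_seq ?addr0 // => m /andP[_ ms].
  have /negbTE -> : a != m by apply: contraNneq aS => ->.
  by rewrite mulr0.
by rewrite mulr0 add0r ih.
Qed.

Section Meas.
Context d (T : measurableType d) (R : realType).

Lemma mfloor (g : T -> R) (K : R) (n : int) : measurable_fun setT g ->
  measurable_fun setT (fun t => Num.floor (K * g t) == n).
Proof.
move=> mg.
rewrite (_ : (fun t => _) = (fun t => (n%:~R <= K * g t) && (K * g t < (n + 1)%:~R))).
  apply: measurable_and.
    apply: measurable_fun_ler; first exact: measurable_cst.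
    by apply: measurable_funM => //; exact: measurable_cst.
  apply: measurable_fun_ltr; last exact: measurable_cst.
  by apply: measurable_funM => //; exact: measurable_cst.
by apply/funext => t; rewrite floor_eq.
Qed.

End Meas.
Section Ext.
Context d (T : measurableType d) (R : realType) (P : probability T R).

Lemma bm_b2R (b : T -> bool) : measurable_fun setT b -> bm (fun t => (b t)%:R : R).
Proof.
move=> mb; split; last by exists 1 => t; case: (b t); rewrite ?normr1 ?normr0.
rewrite (_ : (fun t => _) = \1_(b @^-1` [set true])); last first.
  apply/funext => t; rewrite indicE.
  by have [bt|bt] := boolP (b t); [rewrite mem_set | rewrite memNset //= (negbTE bt)].
apply: (@measurable_indic _ _ _ setT); rewrite -[X in measurable X]setTI; exact: mb.
Qed.

Lemma bm_absle (f : T -> R) B : bm f -> (forall t, `|f t| <= B) ->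
  `|EE P f| <= B.
Proof.
move=> bf fB; apply: le_trans (EE_norm P bf) _.
rewrite -[X in _ <= X](EE_cst P B); apply: EE_le => //; first exact: bm_norm.
exact: bm_cst.
Qed.

Lemma ext (f h g : T -> R) (Bf Bh : R) :
  bm f -> bm h -> measurable_fun setT g -> (forall t, `|g t| <= 1) ->
  (forall t, `|f t| <= Bf) -> (forall t, `|h t| <= Bh) ->
  (forall (K : R) (n : int),
     EE P (fun t => (Num.floor (K * g t) == n)%:R * f t) =
     EE P (fun t => (Num.floor (K * g t) == n)%:R * h t)) ->
  EE P (fun t => g t * f t) = EE P (fun t => g t * h t).
Proof.
move=> bf bh mg g1 fB hB H.
apply/eqP; rewrite -subr_eq0; apply/eqP.
apply: (@small_eq0 _ _ (Bf + Bh)) => k.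
set K : R := k.+1%:R.
have K0 : 0 < K by rewrite ltr0Sn.
pose s := [seq (i%:Z - k.+1%:Z) | i <- iota 0 (2 * k.+1).+1].
pose gk t := \sum_(m <- s) ((m%:~R / K) * (Num.floor (K * g t) == m)%:R).
have bind m : bm (fun t => (Num.floor (K * g t) == m)%:R : R).
  exact: bm_b2R (mfloor K m mg).
have bgk : bm gk by apply: bm_sum => m; apply: bmM => //; exact: bm_cst.
have bg : bm g by split => //; exists 1.
have gkE t : gk t = (Num.floor (K * g t))%:~R / K.
  rewrite /gk (sum_ind (fun m : int => m%:~R / K)) //.
    rewrite map_inj_uniq ?iota_uniq // => i j /eqP.
    by rewrite subr_eq addrNK => /eqP [].
  set z := Num.floor _.
  have hg := g1 t; rewrite ler_norml in hg; case/andP: hg => hg1 hg2.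
  have z1 : z <= k.+1%:Z.
    rewrite -(ler_int R); apply: le_trans (Num.Theory.floor_le _) _.
    by rewrite [X in _ <= X]/= -/K ler_piMr.
  have z2 : - k.+1%:Z <= z.
    rewrite -ltzD1 -(ltr_int R); apply: le_lt_trans (Num.Theory.floorD1_gt _).
    by rewrite rmorphN /= -/K -mulrN1 ler_pM2l.
  apply/mapP; exists (absz (z + k.+1%:Z)).
    rewrite mem_iota add0n; apply/andP; split => //.
    lia.
  lia.
have gk_err t : `|g t - gk t| <= K^-1.
  rewrite gkE (_ : g t - _ = (K * g t - (Num.floor (K * g t))%:~R) / K); last first.
    by field; rewrite gt_eqF.
  have Ki : 0 <= K^-1 by rewrite invr_ge0 ltW.
  rewrite normrM [`|K^-1|]ger0_norm //.
  rewrite ger0_norm; last by rewrite subr_ge0 Num.Theory.floor_le.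
  rewrite -[leRHS]mul1r ler_pM2r ?invr_gt0 // lerBlDr addrC.
  by apply: ltW; rewrite -intrD1; exact: Num.Theory.floorD1_gt.
have Heq : EE P (fun t => gk t * f t) = EE P (fun t => gk t * h t).
  rewrite /gk; under eq_fun do rewrite mulr_suml; under [in RHS]eq_fun do rewrite mulr_suml.
  rewrite !EE_sum; last 2 first.
  - by move=> m; apply: bmM => //; apply: bmM => //; exact: bm_cst.
  - by move=> m; apply: bmM => //; apply: bmM => //; exact: bm_cst.
  apply: eq_bigr => m _.
  under eq_fun do rewrite -mulrA; under [in RHS]eq_fun do rewrite -mulrA.
  by rewrite !EEZ ?H //; apply: bmM.
have E1 (u : T -> R) : bm u -> EE P (fun t => g t * u t) =
    EE P (fun t => (g t - gk t) * u t) + EE P (fun t => gk t * u t).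
  move=> bu; rewrite -EED; [|exact: bmM (bmB _ _) _|exact: bmM].
  by congr EE; apply/funext => t; rewrite -mulrDl subrK.
have B1 (u : T -> R) B : bm u -> (forall t, `|u t| <= B) ->
    `|EE P (fun t => (g t - gk t) * u t)| <= B / K.
  move=> bu uB; apply: bm_absle; first by apply: bmM => //; exact: bmB.
  move=> t; rewrite normrM mulrC; apply: ler_pM => //; exact: gk_err.
rewrite (E1 _ bf) (E1 _ bh) Heq opprD addrACA subrr addr0 mulrDl.
by apply: le_trans (ler_normB _ _) _; apply: lerD; [exact: B1|exact: B1].
Qed.

End Ext.
Section K1.
Context d (T : measurableType d) (R : realType) (P : probability T R).

Lemma EE_indic (A : set T) (f : T -> R) :
  EE P (fun t => (t \in A)%:R * f t) = fine (\int[P]_(t in A) (f t)%:E)%E.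
Proof.
rewrite /EE -[RHS]/(Rintegral P A f) [RHS]Rintegral_mkcond.
apply: eq_Rintegral => t _.
by rewrite patchE; case: (t \in A); rewrite ?mul1r ?mul0r.
Qed.

Lemma K1 (N : nat) (F : set (set T)) (I p : 'I_N -> T -> R) :
  F `<=` measurable ->
  (forall i, measurable_fun setT (I i)) ->
  (forall i, measurable_fun setT (p i)) ->
  (forall i t, I i t = 0 \/ I i t = 1) ->
  (forall i t, 0 <= p i t <= 1) ->
  cond_indep_bernoulli P F I p ->
  forall A j, F A ->
  EE P (fun t => (t \in A)%:R * I j t) = EE P (fun t => (t \in A)%:R * p j t).
Proof.
move=> FM mI mp I01 p01 H A j FA.
have mA := FM A FA.
rewrite !EE_indic; congr fine.
pose FI t i (b : bool) : R := (I i t == b%:R)%:R.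
pose Fp t i (b : bool) : R := if b then p i t else 1 - p i t.
have FI1 t i : FI t i true + FI t i false = 1.
  by rewrite /FI; case: (I01 i t) => ->; rewrite ?eqxx ?oner_eq0 ?(eq_sym 0) ?oner_eq0 /= ?addr0 ?add0r.
have Fp1 t i : Fp t i true + Fp t i false = 1 by rewrite /Fp subrKC.
transitivity (\int[P]_(t in A) (\sum_(e : {ffun 'I_N -> bool} | e j) \prod_(i < N) FI t i (e i))%:E)%E.
  apply: eq_integral => t _; rewrite sum_marg //; congr EFin.
  by rewrite /FI; case: (I01 j t) => ->; rewrite ?eqxx ?oner_eq0 ?(eq_sym 0) ?oner_eq0.
transitivity (\int[P]_(t in A) (\sum_(e : {ffun 'I_N -> bool} | e j) \prod_(i < N) Fp t i (e i))%:E)%E; last first.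
  by apply: eq_integral => t _; rewrite sum_marg.
have mFI (e : {ffun 'I_N -> bool}) : measurable_fun A (fun t => (\prod_(i < N) FI t i (e i))%:E).
  apply/measurable_EFinP; apply: measurable_prod => i _.
  have h : measurable_fun setT (fun t => FI t i (e i)).
    have [] := @bm_b2R _ _ R (fun t => I i t == (e i)%:R) (measurable_fun_eqr (mI i) (measurable_cst _)).
    by rewrite /FI.
  exact: (measurable_funS measurableT (subsetT _) h).
have mFp (e : {ffun 'I_N -> bool}) : measurable_fun A (fun t => (\prod_(i < N) Fp t i (e i))%:E).
  apply/measurable_EFinP; apply: measurable_prod => i _.
  have h : measurable_fun setT (fun t => Fp t i (e i)).
    rewrite /Fp; case: (e i) => //; apply: measurable_funB => //; exact: measurable_cst.
  exact: (measurable_funS measurableT (subsetT _) h).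
under eq_integral do rewrite -sumEFin -big_filter.
under [in RHS]eq_integral do rewrite -sumEFin -big_filter.
rewrite !ge0_integral_sum //; last 2 first.
- move=> e t _; rewrite lee_fin; apply: prodr_ge0 => i _; rewrite /Fp.
  by case: (e i); case/andP: (p01 i t) => // _; rewrite subr_ge0.
- by move=> e t _; rewrite lee_fin; apply: prodr_ge0 => i _; rewrite /FI ler0n.
apply: eq_bigr => e _; exact: (H A e FA).
Qed.

End K1.
Section Det.
Context (R : realType).
Local Open Scope ereal_scope.

Lemma tail_small (a : nat -> R) : (forall n, (0 <= a n)%R) ->
  \sum_(0 <= n <oo) (a n)%:E < +oo ->
  forall e : R, (0 < e)%R -> exists M, forall m, (\sum_(M <= k < m) a k <= e)%R.
Proof.
move=> a0 afin e e0.
have := @nneseries_tail_cvg R (fun k => (a k)%:E) xpredT afin.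
move=> /(_ (fun k _ => a0 k)) /fine_cvgP [finN /cvgr0Pnorm_lt /(_ e e0)] hN.
near \oo => M; exists M => m.
have h1 : \sum_(M <= k <oo) (a k)%:E \is a fin_num by near: M.
have h2 : (`|fine (\sum_(M <= k <oo) (a k)%:E)| < e)%R by near: M.
rewrite -lee_fin -sumEFin; apply: le_trans (nneseries_lim_ge _ _) _.
  by move=> n _ _; rewrite lee_fin.
rewrite -(fineK h1) lee_fin; apply: ltW; apply: le_lt_trans h2; exact: ler_norm.
Unshelve. all: end_near. Qed.

Lemma tail_big (a : nat -> R) : (forall n, (0 <= a n)%R) ->
  \sum_(0 <= n <oo) (a n)%:E = +oo ->
  forall M (B : R), exists m, (B < \sum_(M <= k < m) a k)%R.
Proof.
move=> a0 ainf M B; apply/not_existsP => hB.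
have hle : \sum_(M <= k <oo) (a k)%:E <= B%:E.
  apply: lime_le; first by apply: is_cvg_nneseries => n _ _; rewrite lee_fin.
  apply: nearW => m; rewrite sumEFin lee_fin; rewrite leNgt; exact/negP/hB.
move: ainf; rewrite (@nneseries_split R _ 0 M) /=; last by move=> k _; rewrite lee_fin.
rewrite add0n sumEFin => /eqP; apply/negP.
rewrite -(@fineK _ (\sum_(M <= k <oo) (a k)%:E)) -?EFinD //.
rewrite ge0_fin_numE; first exact: le_lt_trans hle (ltry _).
by apply: nneseries_ge0 => n _ _; rewrite lee_fin.
Qed.

End Det.
Lemma det (R : realType) (r x : nat -> R) : (forall n, 0 <= r n) ->
  (\sum_(0 <= n <oo) (r n)%:E = +oo)%E ->
  (\sum_(0 <= n <oo) (r n ^+ 2)%:E < +oo)%E ->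
  (forall n, `|x n.+1 - x n| <= 2 * r n) ->
  (\sum_(0 <= n <oo) (r n * x n ^+ 2)%:E < +oo)%E ->
  x @ \oo --> 0.
Proof.
move=> r0 rinf r2fin dx rxfin; apply/cvgr0Pnorm_lt => e e0.
have rx0 n : 0 <= r n * x n ^+ 2 by rewrite mulr_ge0 ?sqr_ge0.
have e80 : 0 < e / 8 by rewrite divr_gt0.
have e0' : 0 <= e := ltW e0.
have e20 : 0 <= e / 2 by rewrite divr_ge0.
have e3 : 0 < e ^+ 3 / 64 by rewrite divr_gt0 // exprn_gt0.
have e82 : 0 < (e / 8) ^+ 2 by rewrite exprn_gt0.
have [M1 HM1] := tail_small rx0 rxfin e3.
have [M2 HM2] := tail_small (fun n => sqr_ge0 (r n)) r2fin e82.
have rsmall k : (M2 <= k)%N -> r k <= e / 8.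
  move=> Mk; rewrite -(@ler_pXn2r _ 2) ?nnegrE ?r0 ?divr_ge0 //.
  apply: le_trans (HM2 k.+1); rewrite big_nat_recr //= lerDr.
  by apply: sumr_ge0 => i _; exact: sqr_ge0.
pose M := maxn M1 M2.
have [k0 [Mk0 xk0]] : exists k0, (M <= k0)%N /\ `|x k0| < e / 2.
  apply/not_existsP => H.
  have hk k : (M <= k)%N -> r k <= 4 / e ^+ 2 * (r k * x k ^+ 2).
    move=> Mk; have : e / 2 <= `|x k|.
      by rewrite leNgt; apply/negP => h; apply: (H k); split.
    move=> hxk; have hx2 : e ^+ 2 / 4 <= x k ^+ 2.
      rewrite -[x k ^+ 2]real_normK ?num_real //.
      have -> : e ^+ 2 / 4 = (e / 2) ^+ 2 by rewrite expr_div_n; congr (_ / _); rewrite -natrX.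
      by rewrite ler_pXn2r ?nnegrE.
    rewrite mulrCA -[leLHS]mulr1; apply: ler_wpM2l => //.
    have e2 : e ^+ 2 != 0 by rewrite expf_neq0 // gt_eqF.
    rewrite [leLHS](_ : _ = 4 / e ^+ 2 * (e ^+ 2 / 4)); last by field; rewrite gt_eqF.
    by apply: ler_wpM2l => //; rewrite divr_ge0 // exprn_ge0.
  have [m hm] := tail_big r0 rinf M (4 / e ^+ 2 * (e ^+ 3 / 64)).
  move: hm; apply/negP; rewrite -leNgt.
  apply: le_trans (_ : \sum_(M <= k < m) (4 / e ^+ 2 * (r k * x k ^+ 2)) <= _).
    by rewrite !big_nat; apply: ler_sum => k /andP[Mk _]; exact: hk.
  rewrite -mulr_sumr ler_wpM2l ?divr_ge0 ?exprn_ge0 //.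
  apply: le_trans (HM1 m).
  case: (leqP m M) => mM; first by rewrite big_geq // sumr_ge0.
  rewrite [leRHS](@big_cat_nat _ _ _ M) //= ?leq_maxl //; last exact: ltnW.
  by rewrite lerDr sumr_ge0.
have inv j : `|x (k0 + j)%N| <= 3 * e / 4 + 8 / e ^+ 2 * \sum_(k0 <= k < k0 + j) (r k * x k ^+ 2).
  elim: j => [|j ih].
    rewrite addn0 big_geq // mulr0 addr0; apply: ltW; apply: lt_le_trans xk0 _.
    rewrite -subr_ge0 (_ : 3 * e / 4 - e / 2 = e / 4); first by rewrite divr_ge0.
    by field.
  have hM : (M2 <= k0 + j)%N.
    by apply: (leq_trans (leq_maxr M1 M2)); apply: (leq_trans Mk0); exact: leq_addr.
  have step : `|x (k0 + j.+1)%N| <= `|x (k0 + j)%N| + 2 * r (k0 + j)%N.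
    rewrite addnS; apply: le_trans (_ : `|x (k0 + j)%N| + `|x (k0 + j).+1 - x (k0 + j)%N| <= _).
      by rewrite -[X in `|X| <= _](subrK (x (k0 + j)%N)) addrC; exact: ler_normD.
    by rewrite lerD2l.
  apply: le_trans step _.
  rewrite addnS big_nat_recr ?leq_addr //= mulrDr addrA.
  have rk := rsmall _ hM; have rk0 := r0 (k0 + j)%N.
  have S0 : 0 <= 8 / e ^+ 2 * \sum_(k0 <= k < k0 + j) (r k * x k ^+ 2).
    by rewrite mulr_ge0 ?divr_ge0 ?exprn_ge0 // sumr_ge0.
  case: (ltP `|x (k0 + j)%N| (e / 2)) => hx.
    apply: (@le_trans _ _ (3 * e / 4 + 8 / e ^+ 2 * \sum_(k0 <= k < k0 + j) (r k * x k ^+ 2))); last first.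
      by rewrite lerDl mulr_ge0 ?divr_ge0 ?exprn_ge0.
    rewrite (_ : 3 * e / 4 = e / 2 + 2 * (e / 8)); last by field.
    rewrite -[leLHS]addr0; apply: lerD => //.
    by apply: lerD; [exact: ltW | rewrite ler_pM2l].
  apply: le_trans (lerD ih (_ : 2 * r (k0 + j)%N <= 8 / e ^+ 2 * (r (k0 + j)%N * x (k0 + j)%N ^+ 2))) _.
    have hx2 : e ^+ 2 / 4 <= x (k0 + j)%N ^+ 2.
      rewrite -[x (k0 + j)%N ^+ 2]real_normK ?num_real //.
      have -> : e ^+ 2 / 4 = (e / 2) ^+ 2 by rewrite expr_div_n; congr (_ / _); rewrite -natrX.
      by rewrite ler_pXn2r ?nnegrE //; apply: le_trans hx.
    rewrite mulrCA [leLHS]mulrC; apply: ler_wpM2l => //.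
    have e2 : e ^+ 2 != 0 by rewrite expf_neq0 // gt_eqF.
    rewrite [leLHS](_ : _ = 8 / e ^+ 2 * (e ^+ 2 / 4)); last by field; rewrite gt_eqF.
    by apply: ler_wpM2l => //; rewrite divr_ge0 // exprn_ge0.
  by [].
near=> n.
have kn : (k0 <= n)%N by near: n; exists k0.
rewrite -(subnKC kn); apply: le_lt_trans (inv _) _.
have hS : \sum_(k0 <= k < k0 + (n - k0)) (r k * x k ^+ 2) <= e ^+ 3 / 64.
  apply: le_trans (HM1 (k0 + (n - k0))%N).
  rewrite [leRHS](@big_cat_nat _ _ _ k0) //=; try exact: leq_addr;
    try exact: leq_trans (leq_maxl M1 M2) Mk0.
  by rewrite lerDr sumr_ge0.
have : 8 / e ^+ 2 * \sum_(k0 <= k < k0 + (n - k0)) (r k * x k ^+ 2) <= e / 8.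
  apply: le_trans (ler_wpM2l _ hS) _; first by rewrite divr_ge0 ?exprn_ge0.
  by rewrite (_ : 8 / e ^+ 2 * (e ^+ 3 / 64) = e / 8) //; field; rewrite gt_eqF.
move=> h; apply: le_lt_trans (lerD (lexx _) h) _.
rewrite -subr_gt0 (_ : e - (3 * e / 4 + e / 8) = e / 8) //.
by field.
Unshelve. all: end_near. Qed.
Section AE.
Context d (T : measurableType d) (R : realType) (P : probability T R).

Lemma EE_fin (f : T -> R) : bm f -> (\int[P]_t (f t)%:E = (EE P f)%:E)%E.
Proof. by move=> bf; rewrite /EE /Rintegral fineK //; apply: integrable_fin_num => //; exact: bm_int. Qed.

Lemma ae_series_fin (a : nat -> T -> R) : (forall n t, 0 <= a n t) -> (forall n, bm (a n)) ->
  (exists C, forall m, \sum_(0 <= n < m) EE P (a n) <= C) ->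
  {ae P, forall t, (\sum_(0 <= n <oo) (a n t)%:E < +oo)%E}.
Proof.
move=> a0 ba [C hC].
pose f t := (\sum_(0 <= n <oo) (a n t)%:E)%E.
have f0 t : (0 <= f t)%E by apply: nneseries_ge0 => n _ _; rewrite lee_fin.
have mf : measurable_fun setT f.
  apply: (@ge0_emeasurable_sum _ _ _ setT (fun n t => (a n t)%:E) xpredT).
    by move=> k x _ _; rewrite lee_fin.
  by move=> k _; apply/measurable_EFinP; exact: (ba k).1.
have intf : (\int[P]_t f t <= C%:E)%E.
  rewrite /f integral_nneseries //; last first.
    by move=> n t _; rewrite lee_fin.
    by move=> n; apply/measurable_EFinP; exact: (ba n).1.
  apply: lime_le; first by apply: is_cvg_nneseries => n _ _; apply: integral_ge0 => t _; rewrite lee_fin.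
  apply: nearW => m; rewrite (eq_bigr (fun n => (EE P (a n))%:E)); last by move=> n _; exact: EE_fin.
  by rewrite sumEFin lee_fin.
have fint : P.-integrable setT f.
  apply/integrableP; split => //.
  under eq_integral do rewrite gee0_abs //.
  exact: le_lt_trans intf (ltry _).
apply: filterS (integrable_ae measurableT fint) => t /(_ I).
by rewrite ge0_fin_numE.
Qed.

End AE.

Unset Implicit Arguments.

Theorem theorem2p3 (d : measure_display) (T : measurableType d) (R : realType)
  (P : probability T R) (N : nat) (rho alpha q : R) (r : nat -> R)
  (Z : nat -> 'I_N -> T -> R) (I : nat -> 'I_N -> T -> R) :
  (0 < N)%N ->
  0 <= rho <= 1 -> 0 <= alpha <= 1 -> 0 <= q <= 1 ->
  (forall n, 0 <= r n < 1) ->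
  (forall n i, measurable_fun setT (Z n i)) ->
  (forall n i, measurable_fun setT (I n i)) ->
  (forall n i t, 0 <= Z n i t <= 1) ->
  (forall n i t, I n i t = 0 \/ I n i t = 1) ->
  (forall n i t, Z n.+1 i t
     = (1 - r n) * Z n i t + r n * (rho * I n.+1 i t + (1 - rho) * q)) ->
  (forall n, cond_indep_bernoulli P (natural_filtration Z n) (I n.+1)
     (fun i t => (1 - alpha) * Z n i t + alpha * zmean Z n t)) ->
  (\sum_(0 <= n <oo) (r n)%:E = +oo)%E ->
  (\sum_(0 <= n <oo) (r n ^+ 2)%:E < +oo)%E ->
  rho * (1 - alpha) < 1 ->
  (forall i : 'I_N,
     {ae P, forall t, (fun n => Z n i t - zmean Z n t) @ \oo --> (0 : R)}) /\
  (forall Zlim : T -> R,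
     {ae P, forall t, (fun n => zmean Z n t) @ \oo --> Zlim t} ->
     forall i : 'I_N, {ae P, forall t, (fun n => Z n i t) @ \oo --> Zlim t}).
Proof.
move=> N0 hrho halpha hq hr mZ mI Z01 I01 hZ hind rinf r2fin hbeta.
have main : forall i : 'I_N,
    {ae P, forall t, (fun n => Z n i t - zmean Z n t) @ \oo --> (0 : R)}.
  move=> i.
  set Nr : R := N%:R.
  have Nr0 : 0 < Nr by rewrite ltr0n.
  have NrE : Nr != 0 by rewrite gt_eqF.
  pose Zb n t := zmean Z n t.
  pose D n t := Z n i t - Zb n t.
  pose Ib n t := (\sum_(j < N) I n j t) / Nr.
  pose X n t := I n.+1 i t - Ib n.+1 t.
  pose p n j t := (1 - alpha) * Z n j t + alpha * Zb n t.
  have [a0 a1] := andP halpha; have [rho0 rho1] := andP hrho.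
  have I01' n j t : 0 <= I n j t <= 1.
    by case: (I01 n j t) => ->; rewrite ?lexx ?ler01.
  have mean01 (u : 'I_N -> R) : (forall j, 0 <= u j <= 1) ->
      0 <= (\sum_(j < N) u j) / Nr <= 1.
    move=> hu; apply/andP; split.
      apply: divr_ge0; last exact: ltW.
      by apply: sumr_ge0 => j _; case/andP: (hu j).
    rewrite ler_pdivrMr // mul1r.
    apply: le_trans (ler_sum _ (fun j _ => (andP (hu j)).2)) _.
    by rewrite sumr_const card_ord.
  have Zb01 n t : 0 <= Zb n t <= 1 by exact: mean01.
  have Ib01 n t : 0 <= Ib n t <= 1 by exact: mean01.
  have diff1 (a b : R) : 0 <= a <= 1 -> 0 <= b <= 1 -> `|a - b| <= 1.
    by move=> /andP[? ?] /andP[? ?]; rewrite ler_norml; apply/andP; split; lra.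
  have D1 n t : `|D n t| <= 1 by exact: diff1.
  have X1 n t : `|X n t| <= 1 by exact: diff1.
  have p01 n j t : 0 <= p n j t <= 1.
    have [z0 z1] := andP (Z01 n j t); have [b0 b1] := andP (Zb01 n t).
    apply/andP; split; first by rewrite addr_ge0 // mulr_ge0 // subr_ge0.
    apply: le_trans (_ : (1 - alpha) * 1 + alpha * 1 <= 1); last by lra.
    by apply: lerD; apply: ler_wpM2l => //; rewrite subr_ge0.
  have n01 (a : R) : 0 <= a <= 1 -> `|a| <= 1.
    by move=> /andP[? ?]; rewrite ger0_norm.
  have mZb n : measurable_fun setT (Zb n).
    rewrite /Zb /zmean; apply: measurable_funM; last exact: measurable_cst.
    by apply: measurable_sum => j; exact: mZ.
  have mIb n : measurable_fun setT (Ib n).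
    rewrite /Ib; apply: measurable_funM; last exact: measurable_cst.
    by apply: measurable_sum => j; exact: mI.
  have bZ n j : bm (Z n j) by split => //; exists 1 => t; exact: n01.
  have bI n j : bm (I n j) by split => //; exists 1 => t; exact: n01.
  have bZb n : bm (Zb n) by split => //; exists 1 => t; exact: n01.
  have bIb n : bm (Ib n) by split => //; exists 1 => t; exact: n01.
  have bD n : bm (D n) by exact: bmB.
  have bX n : bm (X n) by exact: bmB.
  have bp n j : bm (p n j).
    by apply: bmD; apply: bmM => //; exact: bm_cst.
  have hZb k t : Zb k.+1 t = (1 - r k) * Zb k t + r k * (rho * Ib k.+1 t + (1 - rho) * q).
    rewrite /Zb /Ib /zmean -/Nr (eq_bigr _ (fun j _ => hZ k j t)) big_split /=.
    rewrite -mulr_sumr -mulr_sumr big_split /= -mulr_sumr sumr_const card_ord -/Nr.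
    by rewrite -mulr_natr; field.
  have hD : forall k t, D k.+1 t = (1 - r k) * D k t + r k * rho * X k t.
    move=> k t.
    rewrite /D /X hZ hZb; ring.
  have hF n : natural_filtration Z n `<=` measurable.
    apply: smallest_sub; first exact: sigma_algebra_measurable.
    move=> _ [k [j [B [_ [mB ->]]]]]; rewrite -[X in measurable X]setTI.
    exact: (mZ k j measurableT B mB).
  have KI n j : EE P (fun t => D n t * I n.+1 j t) = EE P (fun t => D n t * p n j t).
    apply: (@ext _ _ _ P _ _ _ 1 1) => //.
    - exact: (bD n).1.
    - by move=> t; exact: n01.
    - by move=> t; exact: n01.
    move=> K m.
    pose T' := g_sigma_algebraType (natural_gens Z n).
    have mZ' j' : measurable_fun (setT : set T') (Z n j' : T' -> R).
      move=> _ B mB; rewrite setTI; apply: sub_sigma_algebra.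
      by exists n, j', B; split.
    have mD' : measurable_fun (setT : set T') (D n : T' -> R).
      rewrite /D /Zb /zmean; apply: measurable_funB => //; apply: measurable_funM.
        by apply: measurable_sum => j'; exact: mZ'.
      exact: measurable_cst.
    have FA : natural_filtration Z n [set t | Num.floor (K * D n t) == m].
      have := mfloor K m mD' measurableT (Y := [set true]) Logic.I.
      by rewrite setTI.
    have := K1 (hF n) (mI n.+1) (fun j => (bp n j).1) (I01 n.+1) (p01 n) (hind n) j FA.
    have eqA t : (t \in [set t | Num.floor (K * D n t) == m])%:R =
        (Num.floor (K * D n t) == m)%:R :> R.
      by have [h|h] := boolP (Num.floor (K * D n t) == m);
        [rewrite mem_set | rewrite memNset //= (negbTE h)].
    move=> h.
    transitivity (EE P (fun t => (t \in [set t | Num.floor (K * D n t) == m])%:R * I n.+1 j t)).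
      by congr EE; apply/funext => t; rewrite eqA.
    by rewrite h; congr EE; apply/funext => t; rewrite eqA.
  have comb n (u : 'I_N -> T -> R) : (forall j, bm (u j)) ->
      EE P (fun t => D n t * (u i t - (\sum_(j < N) u j t) / Nr)) =
      EE P (fun t => D n t * u i t) - (\sum_(j < N) EE P (fun t => D n t * u j t)) / Nr.
    move=> bu.
    have bDu j : bm (fun t => D n t * u j t) by exact: bmM.
    rewrite -EE_sum // mulrC -EEZ; last exact: bm_sum.
    rewrite -EEB //; last by apply: bmM => //; [exact: bm_cst | exact: bm_sum].
    congr EE; apply/funext => t; rewrite mulrBr mulr_sumr; congr (_ - _).
    by rewrite -!mulr_sumr; ring.
  have key n : EE P (fun t => D n t * X n t) = (1 - alpha) * EE P (fun t => D n t ^+ 2).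
    have -> : EE P (fun t => D n t * X n t) =
        EE P (fun t => D n t * (I n.+1 i t - (\sum_(j < N) I n.+1 j t) / Nr)) by [].
    rewrite comb //; under eq_bigr do rewrite KI; rewrite KI -comb //.
    rewrite -EEZ; last by exact: bmM.
    congr EE; apply/funext => t.
    rewrite /p big_split /= -!mulr_sumr sumr_const card_ord -/Nr /D /Zb /zmean -/Nr.
    by rewrite -mulr_natr; field.
  have EVb n : 2 * (1 - rho * (1 - alpha)) * (r n * EE P (fun t => D n t ^+ 2)) <=
      EE P (fun t => D n t ^+ 2) - EE P (fun t => D n.+1 t ^+ 2) + 2 * r n ^+ 2.
    have [r0 r1] := andP (hr n).
    have bV k : bm (fun t => D k t ^+ 2) by exact: bmM.
    have bDX : bm (fun t => D n t * X n t) by exact: bmM.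
    set v := EE P (fun t => D n t ^+ 2).
    set w := EE P (fun t => D n.+1 t ^+ 2).
    have hv : 0 <= v <= 1.
      apply/andP; split.
        by rewrite -(EE_cst P 0); apply: EE_le => //; [exact: bm_cst | move=> t; exact: sqr_ge0].
      rewrite -(EE_cst P 1); apply: EE_le => //; first exact: bm_cst.
      move=> t; rewrite -[_ ^+ 2]real_normK ?num_real //.
      by rewrite expr_le1 ?normr_ge0.
    have hw : w <= (1 - r n) ^+ 2 * v + 2 * (1 - r n) * r n * rho * ((1 - alpha) * v) + r n ^+ 2.
      rewrite -key -!EEZ //.
      rewrite -(EE_cst P (r n ^+ 2)) -!EED //; first last.
      - by apply: bmM => //; exact: bm_cst.
      - by apply: bmM => //; exact: bm_cst.
      - exact: bm_cst.
      - by apply: bmD; apply: bmM => //; exact: bm_cst.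
      apply: EE_le => //.
        by apply: bmD; [apply: bmD; apply: bmM => //; exact: bm_cst | exact: bm_cst].
      move=> t; rewrite hD.
      have hb : X n t ^+ 2 <= 1.
        by rewrite -[_ ^+ 2]real_normK ?num_real // expr_le1 ?normr_ge0.
      have hr2 : rho ^+ 2 <= 1 by rewrite expr_le1.
      have hb2 : rho ^+ 2 * X n t ^+ 2 <= 1.
        by rewrite -[1]mulr1; apply: ler_pM => //; rewrite sqr_ge0.
      have -> : ((1 - r n) * D n t + r n * rho * X n t) ^+ 2 =
          (1 - r n) ^+ 2 * D n t ^+ 2 + 2 * (1 - r n) * r n * rho * (D n t * X n t) +
          r n ^+ 2 * (rho ^+ 2 * X n t ^+ 2) by ring.
      rewrite lerD2l -[leRHS]mulr1; apply: ler_wpM2l => //; exact: sqr_ge0.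
    have hb0 : 0 <= rho * (1 - alpha) by rewrite mulr_ge0 // subr_ge0.
    have : 0 <= r n ^+ 2 * (1 - v + 2 * (rho * (1 - alpha)) * v).
      case/andP: hv => v0 v1.
      apply: mulr_ge0; first exact: sqr_ge0.
      apply: addr_ge0; first by rewrite subr_ge0.
      by apply: mulr_ge0 => //; apply: mulr_ge0.
    move: hw; set b := rho * (1 - alpha); set x := r n.
    have -> : 2 * (1 - x) * x * rho * ((1 - alpha) * v) = 2 * (1 - x) * x * b * v by rewrite /b; ring.
    move=> hw h0.
    rewrite -subr_ge0; apply: le_trans h0 _; rewrite -subr_ge0.
    have -> : v - w + 2 * x ^+ 2 - 2 * (1 - b) * (x * v) - x ^+ 2 * (1 - v + 2 * b * v) =
      ((1 - x) ^+ 2 * v + 2 * (1 - x) * x * b * v + x ^+ 2) - w by ring.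
    by rewrite subr_ge0.
  have bV k : bm (fun t => D k t ^+ 2) by exact: bmM.
  have hV01 k : 0 <= EE P (fun t => D k t ^+ 2) <= 1.
    apply/andP; split.
      by rewrite -(EE_cst P 0); apply: EE_le => //; [exact: bm_cst | move=> t; exact: sqr_ge0].
    rewrite -(EE_cst P 1); apply: EE_le => //; first exact: bm_cst.
    move=> t; rewrite -[_ ^+ 2]real_normK ?num_real //.
    by rewrite expr_le1 ?normr_ge0.
  set c := 1 - rho * (1 - alpha).
  have c0 : 0 < c by rewrite subr_gt0.
  set S := fine (\sum_(0 <= n <oo) (r n ^+ 2)%:E)%E.
  have r2le m : \sum_(0 <= n < m) r n ^+ 2 <= S.
    have h0 : (0 <= \sum_(0 <= n <oo) (r n ^+ 2)%:E)%E.
      by apply: nneseries_ge0 => k _ _; rewrite lee_fin sqr_ge0.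
    rewrite -lee_fin -sumEFin /S fineK; last by rewrite ge0_fin_numE.
    by apply: nneseries_lim_ge => k _ _; rewrite lee_fin sqr_ge0.
  have sumb m : \sum_(0 <= n < m) EE P (fun t => r n * D n t ^+ 2) <= (1 + 2 * S) / (2 * c).
    rewrite ler_pdivlMr ?mulr_gt0 // mulrC mulr_sumr.
    apply: le_trans (_ : \sum_(0 <= n < m) (EE P (fun t => D n t ^+ 2) -
        EE P (fun t => D n.+1 t ^+ 2) + 2 * r n ^+ 2) <= _).
      apply: ler_sum => n _; rewrite EEZ //; exact: EVb.
    rewrite big_split /= -mulr_sumr.
    have -> : \sum_(0 <= n < m) (EE P (fun t => D n t ^+ 2) - EE P (fun t => D n.+1 t ^+ 2)) =
        EE P (fun t => D 0%N t ^+ 2) - EE P (fun t => D m t ^+ 2).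
      rewrite -[LHS]opprK -sumrN; under eq_bigr do rewrite opprB.
      by rewrite telescope_sumr // opprB.
    apply: lerD; last by rewrite ler_pM2l // r2le.
    case/andP: (hV01 0%N) => _ h1; case/andP: (hV01 m) => h2 _.
    by apply: le_trans (lerB h1 h2) _; rewrite subr0.
  have ha := @ae_series_fin _ _ _ P (fun n t => r n * D n t ^+ 2) 
    (fun n t => mulr_ge0 (andP (hr n)).1 (sqr_ge0 _))
    (fun n => bmM (@bm_cst _ T _ (r n)) (bV n)) (ex_intro _ _ sumb).
  apply: filterS ha => t ht.
  apply: (@det _ r (fun n => D n t)) => //.
    by move=> n; case/andP: (hr n).
  move=> n; rewrite hD.
  have [r0 _] := andP (hr n).
  have -> : (1 - r n) * D n t + r n * rho * X n t - D n t = r n * (rho * X n t - D n t) by ring.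
  rewrite normrM ger0_norm // mulrC ler_wpM2r //.
  apply: le_trans (ler_normB _ _) _; apply: lerD; last exact: D1.
  rewrite normrM ger0_norm //.
  by rewrite -[1]mul1r; apply: ler_pM => //; exact: X1.
split => // Zlim hlim i.
apply: filterS2 (main i) hlim => t h1 h2.
have -> : (fun n => Z n i t) = (fun n => (Z n i t - zmean Z n t) + zmean Z n t).
  by apply/funext => n; rewrite subrK.
by rewrite -[Zlim t]add0r; apply: cvgD.
Qed.
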